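(* Let $A$ be a complete Boolean algebra, $Z$ an open dense subset of $\mathrm{Ult}(A)$, and $p:Z\to Y$ a perfect irreducible map onto a locally compact Hausdorff space $Y$. Then $\rho_p(\mathrm{KO}(Z))=\mathrm{CR}(Y)$.
   Context: $\mathrm{Ult}(A)$ is the Stone space of ultrafilters of $A$. $\mathrm{KO}(Z)$ is the set of compact open subsets of $Z$; $\mathrm{RC}(X)$ is the set of regular closed subsets of a space $X$ and $\mathrm{CR}(X)$ the set of compact regular closed subsets. $\rho_p:\mathrm{RC}(Z)\to\mathrm{RC}(Y)$ is $H\mapsto p(H)$. A perfect map is continuous, closed, with compact fibres; irreducible means continuous surjective with no proper closed subset of the domain mapped onto the codomain. *)

(* Defs.v *)
From HB Require Import structures.
From mathcomp Require Import all_boot all_order.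
From mathcomp Require Import boolp classical_sets topology.
Set Implicit Arguments. Unset Strict Implicit. Unset Printing Implicit Defensive.
Import Order.TTheory.
Local Open Scope classical_set_scope.

Section Boolean.
Context {disp : Order.disp_t} (A : ctbDistrLatticeType disp).

Definition complete_BA : Prop := forall S : set A, supremums S !=set0.

Definition BA_filter (F : set A) : Prop :=
  [/\ F \top%O,
      (forall a b : A, F a -> (a <= b)%O -> F b) &
      (forall a b : A, F a -> F b -> F (Order.meet a b))].

Definition BA_proper_filter (F : set A) : Prop := BA_filter F /\ ~ F \bot%O.

Definition BA_ultrafilter (F : set A) : Prop :=
  BA_proper_filter F /\ forall G, BA_proper_filter G -> F `<=` G -> G = F.

Record Ult := MkUlt { uf :> set A ; uf_ultra : BA_ultrafilter uf }.

HB.instance Definition _ := gen_eqMixin Ult.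
HB.instance Definition _ := gen_choiceMixin Ult.

Definition stone_basic (a : A) : set Ult := [set u | uf u a].

Definition stone_open (U : set Ult) : Prop :=
  forall u, U u -> exists a, uf u a /\ stone_basic a `<=` U.

Lemma stone_openT : stone_open setT.
Proof.
move=> u _; exists \top%O; split => //.
by case: (uf_ultra u) => -[[]].
Qed.

Lemma stone_openI : setI_closed stone_open.
Proof.
move=> U V oU oV u [Uu Vu].
have [a [ua sa]] := oU u Uu; have [b [ub sb]] := oV u Vu.
exists (Order.meet a b); split.
  by case: (uf_ultra u) => -[[_ _ hm] _] _; apply: hm.
move=> v vab; split.
  by apply: sa; case: (uf_ultra v) => -[[_ hup _] _] _; apply: (hup _ _ vab); exact: leIl.
by apply: sb; case: (uf_ultra v) => -[[_ hup _] _] _; apply: (hup _ _ vab); exact: leIr.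
Qed.

Lemma stone_open_bigU (I : Type) (f : I -> set Ult) :
  (forall i, stone_open (f i)) -> stone_open (\bigcup_i f i).
Proof.
move=> hf u [i _ fiu]; have [a [ua sa]] := hf i u fiu.
by exists a; split => // v /sa fv; exists i.
Qed.

HB.instance Definition _ := isOpenTopological.Build Ult
  stone_openT stone_openI stone_open_bigU.

End Boolean.

Section Spaces.
Context {X Y : topologicalType}.

Definition closed_in (Z C : set X) : Prop := exists C', closed C' /\ C = Z `&` C'.
Definition open_in (Z K : set X) : Prop := exists U, open U /\ K = Z `&` U.

Definition perfect_on (Z : set X) (p : X -> Y) : Prop :=
  [/\ {within Z, continuous p},
      (forall C, closed_in Z C -> closed (p @` C)) &
      (forall y : Y, compact (Z `&` p @^-1` [set y]))].

Definition irreducible_on (Z : set X) (p : X -> Y) : Prop :=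
  [/\ {within Z, continuous p}, p @` Z = [set: Y] &
      (forall C, closed_in Z C -> C `<=` Z -> p @` C = [set: Y] -> C = Z)].

Definition KO (Z : set X) : set (set X) :=
  [set K | K `<=` Z /\ open_in Z K /\ compact K].

Definition CR : set (set Y) :=
  [set H | closure (interior H) = H /\ compact H].

Definition rho (p : X -> Y) (H : set X) : set Y := p @` H.

End Spaces.

(* Main.v *)
Require Import Defs.
From HB Require Import structures.
From mathcomp Require Import all_boot all_order.
From mathcomp Require Import boolp classical_sets topology.
Set Implicit Arguments. Unset Strict Implicit. Unset Printing Implicit Defensive.
Local Open Scope classical_set_scope.
Import Order.Theory.

Section BA.
Context {disp : Order.disp_t} (A : ctbDistrLatticeType disp).
Local Open Scope order_scope.

Lemma uf_top (u : Ult A) : uf u \top.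
Proof. by case: (uf_ultra u) => -[[]]. Qed.
Lemma uf_up (u : Ult A) a b : uf u a -> a <= b -> uf u b.
Proof. by case: (uf_ultra u) => -[[_ h _] _] _; apply: h. Qed.
Lemma uf_meet (u : Ult A) a b : uf u a -> uf u b -> uf u (a `&` b).
Proof. by case: (uf_ultra u) => -[[_ _ h] _] _; apply: h. Qed.
Lemma uf_bot (u : Ult A) : ~ uf u \bot.
Proof. by case: (uf_ultra u) => -[_ h] _. Qed.
Lemma uf_max (u : Ult A) G : BA_proper_filter G -> uf u `<=` G -> G = uf u.
Proof. by case: (uf_ultra u) => _ h; apply: h. Qed.

Lemma uf_prime (u : Ult A) a : uf u a \/ uf u (~` a).
Proof.
have [h|h] := pselect (uf u (~` a)); [by right|left].
pose G := [set x | exists2 f, uf u f & f `&` a <= x].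
have uG : uf u `<=` G by move=> x ux; exists x => //; exact: leIl.
have PG : BA_proper_filter G.
  split; first split.
  - by exists \top; [exact: uf_top|exact: lex1].
  - by move=> x y [f uf fx] xy; exists f => //; exact: le_trans xy.
  - move=> x y [f uf1 fx] [g ug gy]; exists (f `&` g); first exact: uf_meet.
    rewrite lexI; apply/andP; split.
      apply: le_trans fx; apply: leI2 => //; exact: leIl.
    apply: le_trans gy; apply: leI2 => //; exact: leIr.
  - move=> [f uf1]; rewrite lex0 disj_leC => fa; apply: h; exact: uf_up fa.
have := uf_max PG uG => <-.
by exists \top; [exact: uf_top|exact: leIr].
Qed.

Lemma ult_exists c : c != \bot -> exists u : Ult A, uf u c.
Proof.
move=> c0.
pose P (F : set A) := [/\ (forall a b, F a -> a <= b -> F b),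
  (forall a b, F a -> F b -> F (a `&` b)), ~ F \bot & (F !=set0 -> F c)].
have hP : forall F : set (set A), F `<=` P -> total_on F subset ->
    P (\bigcup_(X in F) X).
  move=> F FP tot; split.
  - move=> a b [X FX Xa] ab; exists X => //; have [h _ _ _] := FP _ FX.
    exact: h ab.
  - move=> a b [X FX Xa] [Y FY Yb].
    have [XY|YX] := tot _ _ FX FY.
      exists Y => //; have [_ h _ _] := FP _ FY; exact: h (XY _ Xa) Yb.
    exists X => //; have [_ h _ _] := FP _ FX; exact: h Xa (YX _ Yb).
  - by move=> [X FX Xb]; have [_ _ h _] := FP _ FX; exact: h.
  - move=> [a [X FX Xa]]; exists X => //; have [_ _ _ h] := FP _ FX.
    by apply: h; exists a.
have [M [PM maxM]] := Zorn_bigcup hP.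
case: PM => Mup Mmeet Mbot Mc.
have Pc : P [set x | c <= x].
  split.
  - by move=> a b /= ca ab; exact: le_trans ab.
  - by move=> a b /= ca cb; rewrite lexI ca cb.
  - by move=> /=; rewrite lex0; apply/negP.
  - by move=> _ /=.
have Mne : M !=set0.
  apply/set0P/negP => /eqP M0; apply: (maxM [set x | c <= x]) => //.
  rewrite M0; split; first by [].
  by move=> /(_ c (lexx c)).
have Mc' := Mc Mne.
have Mtop : M \top by apply: Mup Mc' (lex1 c).
have PFM : BA_proper_filter M by split => //; split.
have UM : BA_ultrafilter M.
  split => // G [[Gtop Gup Gmeet] Gbot] MG.
  apply/seteqP; split => //.
  apply: contrapT => nGM.
  apply: (maxM G); first by split.
  by split => // _; exact: MG Mc'.
by exists (MkUlt UM).
Qed.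

Definition sbasic (a : A) : set (Ult A) := stone_basic a.

Lemma open_basic a : open (stone_basic a : set (Ult A)).
Proof. by move=> u ua; exists a; split. Qed.

Lemma nbhs_ult (u : Ult A) (W : set (Ult A)) :
  nbhs u W -> exists2 b, uf u b & stone_basic b `<=` W.
Proof.
rewrite nbhsE => -[B [oB Bu] BW].
have [b [ub sb]] := oB u Bu; exists b => //; exact: subset_trans BW.
Qed.

Lemma ult_closure_open (O : set (Ult A)) :
  complete_BA A -> open O -> open (closure O).
Proof.
move=> cA oO.
pose S := [set a | stone_basic a `<=` O].
have [s [ubs lbs]] := cA S.
suff -> : closure O = stone_basic s by exact: open_basic.
apply/seteqP; split.
  move=> u clu; have [//|us] := uf_prime u s.
  have /clu [v [Ov vs]] : nbhs u (stone_basic (~` s)).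
    by rewrite nbhsE; exists (stone_basic (~` s)) => //; split=> //; exact: open_basic.
  have [a [va aO]] := oO v Ov.
  have vs' : uf v s by apply: uf_up va (ubs a aO).
  have := uf_meet vs' vs; rewrite meetxC => h; exfalso; exact: (uf_bot h).
move=> u us W /nbhs_ult [b ub bW].
have [a Sa ab0] : exists2 a, S a & a `&` b != \bot.
  apply: contrapT => hn.
  have ubb : ubound S (~` b).
    move=> a Sa; rewrite -disj_leC; apply: contrapT => /negP nb.
    by apply: hn; exists a.
  have := lbs _ ubb => sb.
  exfalso; apply: (@uf_bot u); have : uf u (s `&` b) by exact: uf_meet.
  move=> h; apply: uf_up h _; rewrite lex0 disj_leC //.
have [v vab] := ult_exists ab0.
exists v; split.
  by apply: Sa; apply: uf_up vab _; exact: leIl.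
by apply: bW; apply: uf_up vab _; exact: leIr.
Qed.

End BA.
Lemma perfect_preimage_compact {X Y : topologicalType} (Z : set X) (p : X -> Y)
  (H : set Y) : perfect_on Z p -> compact H -> compact (Z `&` p @^-1` H).
Proof.
move=> [_ pcl pfib] cH F PF FC.
have FpH : F (p @^-1` H).
  by apply: (filterS _ FC) => x [].
have [y [Hy cly]] := cH _ (fmap_proper_filter p PF) FpH.
set S := Z `&` p @^-1` [set y].
pose G := filter_from F (fun B => S `&` closure B).
have FG : Filter G.
  apply: filter_from_filter; first by exists setT; exact: filterT.
  move=> B1 B2 FB1 FB2; exists (B1 `&` B2); first exact: filterI.
  move=> x [Sx clx]; have [c1 c2] := closureI clx; by split; split.
have PG : ProperFilter G.
  apply: filter_from_proper => B FB; apply: contrapT => /set0P/negP/negbNE/eqP hS.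
  have Qcl : closed (p @` (Z `&` closure B)).
    by apply: pcl; exists (closure B); split => //; exact: closed_closure.
  have nQy : ~ (p @` (Z `&` closure B)) y.
    move=> [x [Zx clx] pxy].
    have : (S `&` closure B) x by split => //; split.
    by rewrite hS.
  have nb : nbhs y (~` (p @` (Z `&` closure B))).
    by apply: open_nbhs_nbhs; split => //; exact: closed_openC.
  have FA : F (p @^-1` (p @` (Z `&` B))).
    apply: (filterS _ (filterI FC FB)) => x [[Zx _] Bx].
    by exists x.
  have [_ [[x [Zx Bx] <-] hQ]] := cly _ _ FA nb.
  by apply: hQ; exists x => //; split => //; exact: subset_closure.
have GS : G S by exists setT; [exact: filterT|move=> x []].
have [x [Sx clx]] := pfib y G PG GS.
exists x; split.
  by case: Sx => Zx pxy; split => //; rewrite /preimage /= pxy.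
move=> B N FB nN.
have nN' : nbhs x (interior N) by rewrite /interior; apply: open_nbhs_nbhs; split;
  [exact: open_interior|exact: nN].
have GB : G (S `&` closure B) by exists B.
have [z [[_ clz] Nz]] := clx _ _ GB nN'.
have nz : nbhs z (interior N) by apply: open_nbhs_nbhs; split => //; exact: open_interior.
have [w [Bw Nw]] := clz _ nz.
by exists w; split => //; exact: interior_subset.
Qed.

Theorem fact3p9 (disp : Order.disp_t) (A : ctbDistrLatticeType disp)
  (Y : topologicalType) (Z : set (Ult A)) (p : Ult A -> Y) :
  complete_BA A ->
  open Z -> dense Z ->
  hausdorff_space Y -> locally_compact [set: Y] ->
  perfect_on Z p -> irreducible_on Z p ->
  rho p @` KO Z = CR.
Proof.
move=> cA oZ dZ hY lcY [pc pcl pfib] [_ psurj pirr].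
have pcZ : {in Z, continuous p} by rewrite -continuous_open_subspace.
have popen : forall X, open X -> open (Z `&` p @^-1` X).
  by apply/continuous_inP.
have surj : forall y, exists2 x, Z x & p x = y.
  by move=> y; have : (p @` Z) y by rewrite psurj.
apply/seteqP; split.
- move=> _ [K [KZ [[O [oO KE]] cK]] <-].
  have cpK : compact (p @` K).
    by apply: continuous_compact => //; exact: continuous_subspaceW pc.
  have clpK : closed (p @` K) := compact_closed hY cpK.
  split => //; rewrite /rho.
  apply/seteqP; split.
    move=> y /(closureS (@interior_subset _ _)).
    by rewrite -(closure_id _).1.
  move=> _ [x Kx <-] N; rewrite nbhsE => -[N' [oN' N'px] N'N].
  set M := Z `&` p @^-1` N' `&` O.
  have oM : open M by apply: openI => //; exact: popen.
  set Cc := Z `&` ~` M.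
  have xM : M x by move: Kx; rewrite KE => -[Zx Ox]; split.
  have [y' ny'] : exists y', ~ (p @` Cc) y'.
    apply: contrapT => hn; have hC : p @` Cc = setT.
      by apply/seteqP; split => // y _; apply: contrapT => h; apply: hn; exists y.
    have := pirr Cc _ (@subIsetl _ _ _) hC.
    have cin : closed_in Z Cc by exists (~` M); split => //; exact: open_closedC.
    move=> /(_ cin) CZ.
    have : Cc x by rewrite CZ; exact: KZ Kx.
    by case=> _; apply.
  have [x' Zx' px'] := surj y'.
  have Mx' : M x'.
    by apply: contrapT => nM; apply: ny'; exists x'.
  exists y'; split; last first.
    by apply: N'N; rewrite -px'; case: Mx' => -[].
  rewrite /interior.
  have Qcl : closed (p @` (Z `&` ~` O)).
    by apply: pcl; exists (~` O); split => //; exact: open_closedC.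
  apply: (@filterS _ _ _ (~` (p @` (Z `&` ~` O)))).
    move=> q nq; have [z Zz pz] := surj q.
    exists z => //; rewrite KE; split => //.
    by apply: contrapT => nO; apply: nq; exists z.
  apply: open_nbhs_nbhs; split; first exact: closed_openC.
  move=> [z [Zz nO] pz]; apply: ny'; exists z => //; split => // -[_ Oz].
  exact: nO.
- move=> H [HE cH].
  set U := interior H.
  set V := Z `&` p @^-1` U.
  have oV : open V := popen _ (@open_interior _ H).
  have oW : open (closure V) := ult_closure_open cA oV.
  set C := Z `&` p @^-1` H.
  have cC : compact C.
    by apply: perfect_preimage_compact => //; split.
  have clH : closed H by rewrite -HE; exact: closed_closure.
  have KC : Z `&` closure V `<=` C.
    move=> x [Zx clx]; split => //; apply: contrapT => nH.
    have nb : nbhs x (Z `&` p @^-1` (~` H)).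
      apply: open_nbhs_nbhs; split => //; apply: popen; exact: closed_openC.
    have [w [[_ Uw] [_ nHw]]] := clx _ nb.
    by apply: nHw; apply: interior_subset.
  have KE : Z `&` closure V = C `&` closure V.
    apply/seteqP; split.
      by move=> x Kx; split; [exact: KC|case: Kx].
    by move=> x [[Zx _] clx].
  have cK : compact (Z `&` closure V).
    by rewrite KE; apply: compact_closedI => //; exact: closed_closure.
  exists (Z `&` closure V).
    split; first exact: subIsetl.
    by split => //; exists (closure V).
  have cpK : compact (p @` (Z `&` closure V)).
    by apply: continuous_compact => //; apply: continuous_subspaceW pc; exact: subIsetl.
  have clpK := compact_closed hY cpK.
  rewrite /rho; apply/seteqP; split.
    by move=> _ [x /KC [_ Hx] <-].
  have UK : U `<=` p @` (Z `&` closure V).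
    move=> u Uu; have [x Zx pxu] := surj u.
    exists x => //; split => //; apply: subset_closure; split => //.
    by rewrite /preimage /= pxu.
  rewrite -HE; move=> y /(closureS UK).
  by rewrite -(closure_id _).1.
Qed.
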